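(* Let $(P,F)$ be a convex Fuchsian polyhedron in $\mathbb{H}^3$ with invariant plane $\Pi$, and let $Z$ be a Fuchsian deformation of $(P,F)$, with Fuchsian Killing fields $\vec f$ ($f\in F$) such that $Z(fy)=df(\vec f(y)+Z(y))$ for all $y\in P$. Let $Z_h$ be the horizontal component of $Z$. Then $Z_h$ is equivariant under $F$: $Z_h(fy)=df(\vec f(y)+Z_h(y))$ for all $f\in F$ and $y\in P$.
   Context: A convex Fuchsian polyhedron is a pair $(P,F)$ where $P$ is a convex polyhedral surface in $\mathbb{H}^3$ (boundary of a locally finite intersection of half-spaces) and $F$ is a discrete group of orientation-preserving isometries leaving invariant a totally geodesic plane $\Pi$, acting cocompactly without fixed points on $\Pi$, with $F(P)=P$ and $F$ acting freely on $P$. An infinitesimal isometric deformation of $P$ is a triangulation of the faces of $P$ with no new vertices plus a Killing field of $\mathbb{H}^3$ on each triangle, coinciding on common edges; it gives a vector field $Z$ on $P$. A Fuchsian Killing field is the extension of a Killing field $K$ of $\Pi$ defined by: at $x$ at distance $d$ from $\Pi$, with $p_d$ the orthogonal projection onto $\Pi$ of the equidistant surface at distance $d$ through $x$, its value is $(dp_d)^{-1}(K(p_d(x)))$. A Fuchsian deformation is an infinitesimal isometric deformation $Z$ such that for each $f\in F$ there is a Fuchsian Killing field $\vec f$ with $Z(fy)=df(\vec f(y)+Z(y))$ for all $y\in P$. At $x\in P$ the vertical direction is the tangent direction at $x$ of the geodesic through $x$ orthogonal to $\Pi$; horizontal directions are orthogonal to it, and $Z_h$ is the orthogonal projection of $Z$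 onto the horizontal plane. *)

(* Defs.v *)
(* Model: the hyperboloid model of H^3 inside Minkowski space R^{3,1},
   points/vectors are column vectors 'cV[R]_4, the last coordinate is timelike. *)
From HB Require Import structures.
From mathcomp Require Import all_boot all_order all_algebra.
From mathcomp Require Import all_classical all_reals all_analysis.
Set Implicit Arguments. Unset Strict Implicit. Unset Printing Implicit Defensive.
Import Order.TTheory GRing.Theory Num.Theory.
Import numFieldNormedType.Exports.
Local Open Scope classical_set_scope.
Local Open Scope ring_scope.

Section Hyperbolic.
Variable R : realType.

Definition vec := 'cV[R]_4.
Definition mat := 'M[R]_4.

Definition mink (x y : vec) : R :=
  \sum_(i < 4) (if val i == 3%N then -1 else 1) * x i ord0 * y i ord0.

Definition H3 : set vec := [set x | mink x x = -1 /\ 0 < x (inord 3) ord0].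

(* hyperbolic ball around x: points at distance < acosh c *)
Definition hball (x : vec) (c : R) : set vec := [set y | H3 y /\ - mink x y < c].

(* isometries of H^3 (acting linearly; df = f), orientation preserving *)
Definition isometry (A : mat) : Prop :=
  (forall x y, mink (A *m x) (A *m y) = mink x y) /\
  (forall x, H3 x -> H3 (A *m x)).
Definition or_isometry (A : mat) : Prop := isometry A /\ \det A = 1.

(* Killing fields of H^3: x |-> X x with X in so(3,1) *)
Definition killing (X : mat) : Prop :=
  forall x y, mink (X *m x) y + mink x (X *m y) = 0.

Definition unit_spacelike (e : vec) : Prop := mink e e = 1.
Definition plane (e : vec) : set vec := [set x | H3 x /\ mink x e = 0].
Definition halfspace (e : vec) : set vec := [set x | H3 x /\ mink x e <= 0].

Definition inter_half (I : Type) (n : I -> vec) : set vec :=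
  [set x | H3 x /\ forall i, mink x (n i) <= 0].
Definition locally_finite (I : Type) (n : I -> vec) : Prop :=
  forall x, H3 x -> exists c : R, 1 < c /\
    finite_set [set i | exists y, hball x c y /\ plane (n i) y].
Definition surface (I : Type) (n : I -> vec) : set vec :=
  [set x | inter_half n x /\
     forall c : R, 1 < c -> exists y, hball x c y /\ ~ inter_half n y].

Definition is_group (F : set mat) : Prop :=
  F 1%:M /\ (forall f g, F f -> F g -> F (f *m g)) /\
  (forall f, F f -> f \in unitmx /\ F (invmx f)).
Definition discrete (F : set mat) : Prop :=
  exists eps : R, 0 < eps /\ forall f, F f -> `|f - 1%:M| < eps -> f = 1%:M.
Definition acts_on (f : mat) (A : set vec) : set vec := (fun x => f *m x) @` A.
Definition cocompact_on (F : set mat) (A : set vec) : Prop :=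
  exists K : set vec, compact K /\ K `<=` A /\
    A `<=` \bigcup_(f in F) acts_on f K.
Definition acts_freely_on (F : set mat) (A : set vec) : Prop :=
  forall f x, F f -> A x -> f *m x = x -> f = 1%:M.

(* convex Fuchsian polyhedron (P, F) with invariant plane of normal e,
   where P = surface n *)
Definition fuchsian_polyhedron (e : vec) (I : Type) (n : I -> vec)
    (F : set mat) : Prop :=
  [/\ unit_spacelike e,
      (forall i, unit_spacelike (n i)) /\ locally_finite n,
      is_group F /\ (forall f, F f -> or_isometry f) /\ discrete F,
      (forall f, F f -> acts_on f (plane e) = plane e) /\
        cocompact_on F (plane e) /\ acts_freely_on F (plane e) &
      (forall f, F f -> acts_on f (surface n) = surface n) /\
        acts_freely_on F (surface n)].

(* vertices of P: extreme points of the convex set (geodesic segments in the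
   hyperboloid model are projectivized linear segments) *)
Definition vertex (I : Type) (n : I -> vec) (x : vec) : Prop :=
  inter_half n x /\
  ~ (exists p q (a lam : R), inter_half n p /\ inter_half n q /\ p != q /\
       0 < a < 1 /\ 0 < lam /\ x = lam *: (a *: p + (1 - a) *: q)).

(* geodesic triangle with vertices v 0, v 1, v 2; hull_on S restricts to the
   vertices satisfying S (used for common edges / vertices) *)
Definition hull_on (v : 'I_3 -> vec) (S : set vec) : set vec :=
  [set x | H3 x /\ exists c : 'I_3 -> R, (forall j, 0 <= c j) /\
     (forall j, 0 < c j -> S (v j)) /\ x = \sum_(j < 3) c j *: v j].
Definition triangle (v : 'I_3 -> vec) : set vec := hull_on v setT.

Definition triangulation (I : Type) (n : I -> vec) (K : Type)
    (tri : K -> 'I_3 -> vec) : Prop :=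
  [/\ (forall k j, vertex n (tri k j)),
      (forall k (c : 'I_3 -> R), \sum_(j < 3) c j *: tri k j = 0 ->
          forall j, c j = 0),
      (forall k, exists i, forall j, mink (tri k j) (n i) = 0),
      surface n = \bigcup_(k in setT) triangle (tri k) &
      (forall k l, k <> l -> triangle (tri k) `&` triangle (tri l) =
          hull_on (tri k) (range (tri l)))].

Definition inf_iso_deformation (I : Type) (n : I -> vec) (Z : vec -> vec)
    : Prop :=
  exists (K : Type) (tri : K -> 'I_3 -> vec) (X : K -> mat),
    triangulation n tri /\ (forall k, killing (X k)) /\
    forall k x, triangle (tri k) x -> Z x = X k *m x.

(* orthogonal projection onto the plane of normal e (of every equidistant
   surface through x, x |-> p_d(x)) *)
Definition proj (e : vec) (x : vec) : vec :=
  (Num.sqrt (1 + mink x e ^+ 2))^-1 *: (x - mink x e *: e).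

Definition plane_killing (e : vec) (Y : mat) : Prop := killing Y /\ Y *m e = 0.

(* V is the Fuchsian Killing field extending the Killing field Y of Pi:
   V x is tangent at x to the equidistant surface through x
   (mink v x = 0 and mink v e = 0) and d(p_d)(V x) = Y (p_d x). *)
Definition fuchsian_killing (e : vec) (V : vec -> vec) : Prop :=
  exists Y, plane_killing e Y /\ forall x, H3 x ->
    [/\ mink (V x) x = 0, mink (V x) e = 0 &
        'D_(V x) (proj e) x = Y *m proj e x].

(* vertical direction at x: tangent at x of the geodesic through x orthogonal
   to Pi (it lies in span(x, e) and is orthogonal to x) *)
Definition vertical (e : vec) (x : vec) : vec := e + mink x e *: x.
Definition horiz (e : vec) (Z : vec -> vec) (x : vec) : vec :=
  Z x - (mink (Z x) (vertical e x) / mink (vertical e x) (vertical e x))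
          *: vertical e x.

End Hyperbolic.

(* Main.v *)
Require Import Defs.
From HB Require Import structures.
From mathcomp Require Import all_boot all_order all_algebra.
From mathcomp Require Import all_classical all_reals all_analysis.
From mathcomp Require Import ring lra.
Import Order.TTheory GRing.Theory Num.Theory.
Local Open Scope classical_set_scope.
Local Open Scope ring_scope.

Section S.
Variable R : realType.
Implicit Types x y z w : vec R.

Lemma minkC x y : mink x y = mink y x.
Proof. by apply: eq_bigr => i _; rewrite -!mulrA [y i ord0 * _]mulrC. Qed.
Lemma minkDl x y z : mink (x + y) z = mink x z + mink y z.
Proof. by rewrite /mink -big_split; apply: eq_bigr => i _; rewrite !mxE mulrDr mulrDl. Qed.
Lemma minkBl x y z : mink (x - y) z = mink x z - mink y z.
Proof. by rewrite /mink -sumrB; apply: eq_bigr => i _; rewrite !mxE mulrBr mulrBl. Qed.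
Lemma minkZl a x y : mink (a *: x) y = a * mink x y.
Proof. by rewrite /mink mulr_sumr; apply: eq_bigr => i _; rewrite !mxE !mulrA [_ * a]mulrC. Qed.
Lemma minkDr x y z : mink z (x + y) = mink z x + mink z y.
Proof. by rewrite minkC minkDl !(minkC z). Qed.
Lemma minkBr x y z : mink z (x - y) = mink z x - mink z y.
Proof. by rewrite minkC minkBl !(minkC z). Qed.
Lemma minkZr a x y : mink y (a *: x) = a * mink y x.
Proof. by rewrite minkC minkZl minkC. Qed.

Lemma mink_expand x y : mink x y =
  x (inord 0) ord0 * y (inord 0) ord0 + x (inord 1) ord0 * y (inord 1) ord0
  + x (inord 2) ord0 * y (inord 2) ord0 - x (inord 3) ord0 * y (inord 3) ord0.
Proof.
rewrite /mink !big_ord_recl big_ord0 /=.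
have E0 : (inord 0 : 'I_4) = ord0 by apply: val_inj; rewrite /= inordK.
have E1 : (inord 1 : 'I_4) = lift ord0 ord0 by apply: val_inj; rewrite /= inordK.
have E2 : (inord 2 : 'I_4) = lift ord0 (lift ord0 ord0) by apply: val_inj; rewrite /= inordK.
have E3 : (inord 3 : 'I_4) = lift ord0 (lift ord0 (lift ord0 ord0)) by apply: val_inj; rewrite /= inordK.
rewrite E0 E1 E2 E3; ring.
Qed.

Lemma mink_nondeg w : (forall z, mink z w = 0) -> w = 0.
Proof.
move=> H; apply/matrixP => i j; rewrite (ord1 j) [RHS]mxE.
have := H (delta_mx i ord0).
rewrite /mink (bigD1 i) //= big1 ?addr0; last first.
  by move=> k hk; rewrite mxE eq_sym (negbTE hk) /= mulr0 mul0r.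
rewrite mxE !eqxx mulr1; case: ifP => _ /eqP; rewrite ?mulf_eq0 ?oppr_eq0 oner_eq0 //=;
  by move/eqP.
Qed.

Lemma mulmx_mink (f : mat R) x y : or_isometry f -> mink (f *m x) (f *m y) = mink x y.
Proof. by case=> [[->]]. Qed.


Lemma x3_neq0 x : mink x x < 0 -> x (inord 3) ord0 != 0.
Proof.
rewrite mink_expand => h; apply/negP => /eqP h3; rewrite h3 in h.
nra.
Qed.

Lemma L1 (f : mat R) e e2 : or_isometry f -> f *m e2 = e ->
  acts_on f (plane e) = plane e ->
  forall x, mink x x < 0 -> mink x e = 0 -> mink x e2 = 0.
Proof.
move=> Hf He2 Hact x Hx Hxe.
have key : forall z, plane e z -> mink z e2 = 0.
  move=> z Pz; have : plane e (f *m z) by rewrite -Hact; exists z.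
  by case=> _; rewrite -He2 mulmx_mink.
have gen : forall c : R, c ^+ 2 * (- mink x x) = 1 -> 0 < c * x (inord 3) ord0 ->
    mink x e2 = 0.
  move=> c hc hpos.
  have hc0 : c != 0 by apply/negP => /eqP c0; rewrite c0 expr0n mul0r in hc; move/eqP: hc; rewrite eq_sym oner_eq0.
  have : mink (c *: x) e2 = 0.
    apply: key; split; [split|].
    - rewrite minkZl minkZr mulrA -expr2; move: hc; clear; lra.
    - by rewrite mxE.
    - by rewrite minkZl Hxe mulr0.
  by rewrite minkZl => /eqP; rewrite mulf_eq0 (negbTE hc0) /= => /eqP.
set q := - mink x x.
have q0 : 0 < q by rewrite /q oppr_gt0.
have s0 : 0 < Num.sqrt q by rewrite sqrtr_gt0.
have hc : forall c : R, c = (Num.sqrt q)^-1 \/ c = - (Num.sqrt q)^-1 -> c ^+ 2 * q = 1.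
  move=> c [->|->]; by rewrite ?sqrrN exprVn sqr_sqrtr ?mulVf ?(gt_eqF q0) ?ltW.
have := @x3_neq0 x Hx; rewrite neq_lt => /orP [h|h].
- apply: (gen (- (Num.sqrt q)^-1)); first by apply: hc; right.
  by rewrite mulNr -mulrN; apply: mulr_gt0; rewrite ?invr_gt0 // oppr_gt0.
- apply: (gen ((Num.sqrt q)^-1)); first by apply: hc; left.
  by apply: mulr_gt0; rewrite ?invr_gt0.
Qed.


Lemma mink_sq (a : R) p u : mink (a *: p + u) (a *: p + u) =
  a * a * mink p p + a * mink p u + a * mink u p + mink u u.
Proof. rewrite !minkDl !minkDr !minkZl !minkZr; ring. Qed.

Lemma L2 e e2 y : mink e e = 1 -> mink y y = -1 ->
  (forall x, mink x x < 0 -> mink x e = 0 -> mink x e2 = 0) ->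
  forall w, mink w e = 0 -> mink w e2 = 0.
Proof.
move=> Hee Hyy H1 w Hw.
set m := mink y e.
set p := y - m *: e.
have pe : mink p e = 0 by rewrite /p minkBl minkZl Hee mulr1 subrr.
have pp : mink p p = -1 - m ^+ 2.
  rewrite /p !minkBl !minkBr !minkZl !minkZr Hyy Hee (minkC e y) -/m.
  by rewrite expr2; ring.
set c := mink p p.
have c0 : c != 0 by rewrite /c pp; apply/negP => /eqP; move: (sqr_ge0 m); clear; nra.
have p2 : mink p e2 = 0 by apply: H1 => //; rewrite pp; move: (sqr_ge0 m); clear; nra.
set u := w - (mink p w / c) *: p.
have ue : mink u e = 0 by rewrite /u minkBl minkZl Hw pe mulr0 subrr.
have pu : mink p u = 0.
  by rewrite /u minkBr minkZr -/c mulfVK // subrr.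
set s := mink u u.
set a := 1 + `|s|.
have xx : mink (a *: p + u) (a *: p + u) < 0.
  rewrite mink_sq pu (minkC u) pu -/s pp.
  have : s <= `|s| by exact: ler_norm.
  have : 0 <= `|s| by exact: normr_ge0.
  rewrite /a; move: (sqr_ge0 m); clear; nra.
have := H1 _ xx; rewrite minkDl minkZl ue pe mulr0 add0r => /(_ erefl).
rewrite minkDl minkZl p2 mulr0 add0r => ue2.
have : w = u + (mink p w / c) *: p by rewrite /u subrK.
by move=> ->; rewrite minkDl minkZl p2 mulr0 addr0.
Qed.

Lemma L3 e e2 : mink e e = 1 ->
  (forall w, mink w e = 0 -> mink w e2 = 0) -> e2 = mink e2 e *: e.
Proof.
move=> Hee H2; apply/eqP; rewrite -subr_eq0; apply/eqP; apply: mink_nondeg => z.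
have := H2 (z - mink z e *: e).
rewrite minkBl minkZl Hee mulr1 subrr => /(_ erefl).
rewrite minkBl minkZl (minkC e e2) => h.
by rewrite minkBr minkZr mulrC.
Qed.

End S.

Theorem corollary3 (R : realType) (e : vec R) (I : Type) (n : I -> vec R)
    (F : set (mat R)) (Z : vec R -> vec R) (fv : mat R -> vec R -> vec R) :
  fuchsian_polyhedron e n F ->
  inf_iso_deformation n Z ->
  (forall f, F f -> fuchsian_killing e (fv f)) ->
  (forall f y, F f -> surface n y -> Z (f *m y) = f *m (fv f y + Z y)) ->
  forall f y, F f -> surface n y ->
    horiz e Z (f *m y) = f *m (fv f y + horiz e Z y).
Proof.
move=> [He _ [[_ [_ Hinv]] [Hiso _]] [Hact _] _] _ Hfk HZ f y Ff Sy.
have Hee : mink e e = 1 := He.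
have Hy : H3 y := Sy.1.1.
have Hf := Hiso f Ff.
have Mf : forall x y, mink (f *m x) (f *m y) = mink x y := fun x y => @mulmx_mink R f x y Hf.
have Uf : f \in unitmx := (Hinv f Ff).1.
set e2 := invmx f *m e.
have He2 : f *m e2 = e by rewrite /e2 mulKVmx.
have H1 := @L1 R f e e2 Hf He2 (Hact f Ff).
have H2 := @L2 R e e2 y Hee Hy.1 H1.
have H3' := @L3 R e e2 Hee H2.
set l := mink e2 e in H3'.
have l0 : l != 0.
  apply/negP => /eqP l0.
  have : mink e e = 0 by rewrite -{1}He2 H3' l0 -(scalemxAr 0 f e) minkZl mul0r.
  by rewrite Hee => /eqP; rewrite oner_eq0.
have Ee : e = l *: (f *m e) by rewrite (scalemxAr l f e) -H3' He2.
have [fvy fve] : mink (fv f y) y = 0 /\ mink (fv f y) e = 0.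
  have [Y [_ HY]] := Hfk f Ff.
  by case: (HY y Hy).
set m := mink y e.
have Hm : mink (f *m y) e = l * m.
  by rewrite {1}Ee minkZr Mf.
have hv : vertical e (f *m y) = l *: (f *m vertical e y).
  by rewrite /vertical Hm mulmxDr -(scalemxAr m f y) scalerDr scalerA {1}Ee.
rewrite /horiz hv HZ // -/m.
set v := vertical e y.
rewrite minkZr minkZl minkZr !Mf.
have Kv : mink (fv f y + Z y) v = mink (Z y) v.
  by rewrite minkDl /v /vertical minkDr minkZr fvy fve mulr0 addr0 add0r.
rewrite Kv.
set K := mink (Z y) v.
set M := mink v v.
rewrite scalerA (mulmxDr f (fv f y) (Z y)) (mulmxDr f (fv f y)) (mulmxDr f (Z y)) mulmxN -(scalemxAr (K / M) f v) addrA.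
congr (_ - _ *: _).
have [M0|M0] := eqVneq M 0.
  by rewrite M0 !(mulr0, invr0, mul0r).
by field; rewrite M0 l0.
Qed.
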